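(* For a regular language $L\subseteq\Sigma^*$, the following three conditions are equivalent: (A) the syntactic monoid $M$ of $L$ satisfies $yx^{\omega+1}=x^{\omega+1}y$ for all $x,y\in M$, and for all words $x,y,z\in\Sigma^*$ and every non-neutral letter $a$, if $y\in L$ then $xyza^\omega\in L$; (B) there is $p\in\mathbb{N}$ such that for every word $u\in\Sigma^*$, letting $T$ be the set of non-neutral letters $a$ with $|u|_a\ge p$, either $T=\emptyset$ or ($u_{-T}\in \mathrm{Cond}(T)$ iff $u\in L$); (C) there is $p\in\mathbb{N}$ such that for all words $u,v\in\Sigma^*$, letting $T$ be the set of non-neutral letters $a$ with $|u|_a\ge p$, if $v\in L$, $T\neq\emptyset$ and $v_{-T}$ is a factor of $u_{-T}$, then $u\in L$.
   Context: $\Sigma$ is a finite alphabet. A letter $e$ is neutral for $L$ if for all $s,t\in\Sigma^*$, $st\in L$ iff $set\in L$; ''non-neutral'' means not neutral for $L$. $|u|_a$ is the number of occurrences of $a$ in $u$. $u$ is a factor of $v$ if $v=sut$ for some words $s,t$. For $S\subseteq\Sigma$, $u_{-S}$ is the word obtained from $u$ by deleting all letters of $S$. For a non-empty set $S$ of non-neutral letters, $\mathrm{Cond}(S)$ is the set of words $u\in\Sigma^*$ for which there is $v\in L$ such that $v_{-S}$ is a factor of $u_{-S}$. The syntactic monoid $M$ of $L$ is $\Sigma^*$ quotiented by the congruence $u\sim_L v$ iff ($sut\in L\Leftrightarrow svt\in L$ for all $s,t\in\Sigma^*$); $\omega$ is its idempotent power ($x^\omega x^\omega=x^\omega$ for all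 $x\in M$), and $a^\omega$ denotes the letter $a$ repeated $\omega$ times. *)

(* Defs.v *)
From mathcomp Require Import all_boot.
Set Implicit Arguments. Unset Strict Implicit. Unset Printing Implicit Defensive.

Definition language (Sigma : finType) := seq Sigma -> Prop.

Definition regular (Sigma : finType) (L : language Sigma) : Prop :=
  exists (Q : finType) (q0 : Q) (delta : Q -> Sigma -> Q) (F : pred Q),
    forall w, L w <-> F (foldl delta q0 w).

Definition synt (Sigma : finType) (L : language Sigma) (u v : seq Sigma) : Prop :=
  forall s t, L (s ++ u ++ t) <-> L (s ++ v ++ t).

Definition wpow (Sigma : finType) (x : seq Sigma) (n : nat) : seq Sigma :=
  flatten (nseq n x).

Definition neutral (Sigma : finType) (L : language Sigma) (e : Sigma) : Prop :=
  forall s t, L (s ++ t) <-> L (s ++ e :: t).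

Definition del (Sigma : finType) (S : {set Sigma}) (u : seq Sigma) : seq Sigma :=
  [seq c <- u | c \notin S].

Definition Cond (Sigma : finType) (L : language Sigma) (S : {set Sigma})
    (u : seq Sigma) : Prop :=
  exists v, L v /\ infix (del S v) (del S u).

(* Main.v *)
Require Import Defs.
From mathcomp Require Import all_boot.
From Stdlib Require Import Setoid Morphisms.
Set Implicit Arguments. Unset Strict Implicit. Unset Printing Implicit Defensive.

Lemma synt_refl (S : finType) (L : language S) u : synt L u u.
Proof. by move=> s t. Qed.
Lemma synt_sym (S : finType) (L : language S) u v : synt L u v -> synt L v u.
Proof. by move=> H s t; split=> /H. Qed.
Lemma synt_trans (S : finType) (L : language S) u v w :
  synt L u v -> synt L v w -> synt L u w.
Proof. by move=> H1 H2 s t; split=> [/H1/H2|/H2/H1]. Qed.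

#[export] Instance synt_Equiv (S : finType) (L : language S) : Equivalence (@synt S L).
Proof. split; [exact: synt_refl|exact: synt_sym|exact: synt_trans]. Qed.

Lemma synt_catl (S : finType) (L : language S) w u v :
  synt L u v -> synt L (w ++ u) (w ++ v).
Proof. by move=> H s t; have := H (s ++ w) t; rewrite -!catA. Qed.
Lemma synt_catr (S : finType) (L : language S) w u v :
  synt L u v -> synt L (u ++ w) (v ++ w).
Proof. by move=> H s t; have := H s (w ++ t); rewrite -!catA. Qed.

#[export] Instance cat_Proper (S : finType) (L : language S) :
  Proper (synt L ==> synt L ==> synt L) (@cat S).
Proof.
move=> u u' Hu v v' Hv; apply: synt_trans (synt_catr _ Hu) _; exact: synt_catl.
Qed.

Lemma synt_L (S : finType) (L : language S) u v : synt L u v -> L u -> L v.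
Proof. by move=> H; have := H [::] [::]; rewrite /= !cats0 => ->. Qed.

Lemma wpowS (S : finType) (x : seq S) k : wpow x k.+1 = x ++ wpow x k.
Proof. by []. Qed.
Lemma wpowD (S : finType) (x : seq S) a b : wpow x (a + b) = wpow x a ++ wpow x b.
Proof. by elim: a => //= a IH; rewrite /wpow /= -catA -IH. Qed.
Lemma wpowM (S : finType) (x : seq S) a b : wpow (wpow x a) b = wpow x (a * b).
Proof. elim: b => [|b IH]; first by rewrite muln0. by rewrite wpowS IH mulnS wpowD. Qed.
Lemma wpow_nil (S : finType) k : wpow ([::] : seq S) k = [::].
Proof. by elim: k. Qed.
Lemma wpow1 (S : finType) (a : S) k : wpow [:: a] k = nseq k a.
Proof. by elim: k => //= k IH; rewrite wpowS IH. Qed.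
Lemma wpow_rot (S : finType) (x y : seq S) k :
  0 < k -> wpow (x ++ y) k = x ++ wpow (y ++ x) k.-1 ++ y.
Proof.
case: k => // k _; elim: k => [|k IH] /=; first by rewrite /wpow /= !cats0.
by rewrite wpowS IH // wpowS -!catA.
Qed.
Lemma filter_wpow (S : finType) (P : pred S) x k : filter P (wpow x k) = wpow (filter P x) k.
Proof. by elim: k => // k IH; rewrite !wpowS filter_cat IH. Qed.
Lemma count_wpow (S : finType) (P : pred S) x k : count P (wpow x k) = k * count P x.
Proof. by elim: k => // k IH; rewrite !wpowS count_cat IH mulSn. Qed.
Lemma nseq_rcons (S : finType) (b : S) k x : nseq k b ++ b :: x = b :: nseq k b ++ x.
Proof. by elim: k => //= k ->. Qed.

Definition central (S : finType) (L : language S) c := forall y, synt L (y ++ c) (c ++ y).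

Lemma central_synt (S : finType) (L : language S) c d :
  synt L c d -> central L c -> central L d.
Proof. by move=> H Hc y; rewrite -H; exact: Hc. Qed.
Lemma central_nil (S : finType) (L : language S) : central L [::].
Proof. by move=> y; rewrite cats0. Qed.
Lemma central_cat (S : finType) (L : language S) c d :
  central L c -> central L d -> central L (c ++ d).
Proof.
move=> Hc Hd y; rewrite catA (Hc y) -catA (Hd y) catA; reflexivity.
Qed.
Lemma central_wpow (S : finType) (L : language S) c k :
  central L c -> central L (wpow c k).
Proof. move=> Hc; elim: k => [|k IH]; [exact: central_nil| exact: central_cat]. Qed.

Lemma idem_k (S : finType) (L : language S) n :
  (forall x : seq S, synt L (wpow x n) (wpow x (n + n))) ->
  forall x k, synt L (wpow x (k.+1 * n)) (wpow x n).
Proof.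
move=> H1 x; elim=> [|k IH]; first by rewrite mul1n.
rewrite mulSn wpowD IH -wpowD -H1; reflexivity.
Qed.

Lemma idem2 (S : finType) (L : language S) n :
  (forall x : seq S, synt L (wpow x n) (wpow x (n + n))) ->
  forall x, synt L (wpow x n ++ wpow x n) (wpow x n).
Proof. by move=> H1 x; rewrite -wpowD -H1. Qed.

Lemma central_pow (S : finType) (L : language S) n :
  (forall x : seq S, synt L (wpow x n) (wpow x (n + n))) ->
  (forall x y : seq S, synt L (y ++ wpow x n.+1) (wpow x n.+1 ++ y)) ->
  forall x, central L (wpow x n).
Proof.
move=> H1 H2 x; apply: (@central_synt _ _ (wpow (wpow x n.+1) n)).
  by rewrite wpowM idem_k.
by apply: central_wpow => y; apply: H2.
Qed.

Lemma conj_half (S : finType) (L : language S) n :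
  0 < n ->
  (forall x : seq S, synt L (wpow x n) (wpow x (n + n))) ->
  (forall x y : seq S, synt L (y ++ wpow x n.+1) (wpow x n.+1 ++ y)) ->
  forall x y, synt L (wpow (x ++ y) n) (wpow (y ++ x) n ++ wpow (x ++ y) n).
Proof.
move=> Hn H1 H2 x y.
have E : (n + n).-1 = n + n.-1 by rewrite -!subn1 addnBA.
rewrite {1}H1 wpow_rot ?addn_gt0 ?Hn // E wpowD -!catA catA.
rewrite (central_pow H1 H2 (y ++ x) x) -catA -wpow_rot //; reflexivity.
Qed.

Lemma conj_pow (S : finType) (L : language S) n :
  0 < n ->
  (forall x : seq S, synt L (wpow x n) (wpow x (n + n))) ->
  (forall x y : seq S, synt L (y ++ wpow x n.+1) (wpow x n.+1 ++ y)) ->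
  forall x y, synt L (wpow (x ++ y) n) (wpow (y ++ x) n).
Proof.
move=> Hn H1 H2 x y.
rewrite (conj_half Hn H1 H2 x y) (central_pow H1 H2 (x ++ y)) -(conj_half Hn H1 H2 y x).
reflexivity.
Qed.

Lemma absorb (S : finType) (L : language S) n :
  0 < n ->
  (forall x : seq S, synt L (wpow x n) (wpow x (n + n))) ->
  (forall x y : seq S, synt L (y ++ wpow x n.+1) (wpow x n.+1 ++ y)) ->
  forall w a, a \in w -> synt L (wpow w n ++ nseq n a) (wpow w n).
Proof.
move=> Hn H1 H2 w a /splitPr [al be].
have He := conj_pow Hn H1 H2 al (a :: be).
rewrite He.
set e := wpow _ n.
set m := wpow ((be ++ al) ++ [:: a]) n.-1 ++ (be ++ al).
have Ham : a :: m = e by rewrite /e /m (wpow_rot [:: a] (be ++ al) Hn).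
have Ce : central L e := central_pow H1 H2 _.
have Hk : forall k, synt L (e ++ nseq k a ++ wpow m k) e.
  elim=> [|k IH]; first by rewrite /= cats0; reflexivity.
  rewrite wpowS /= -nseq_rcons.
  have -> : a :: m ++ wpow m k = e ++ wpow m k by rewrite -Ham.
  have Hee : synt L (e ++ e) e := idem2 H1 _.
  rewrite (catA (nseq k a) e) (Ce (nseq k a)) -catA (catA e e) Hee; exact: IH.
have Ha : synt L (nseq n a) (nseq n a ++ nseq n a).
  by rewrite -wpow1 idem2 //; reflexivity.
symmetry.
rewrite -{1}(Hk n) {1}Ha -catA (catA e) -(Ce (nseq n a)) -catA (Hk n).
reflexivity.
Qed.

Lemma pump_gen (S : finType) (A : finType) (g : seq S -> A) (a : S) :
  forall u s (X : {set A}),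
  (forall x, x \in X -> exists s1 f1, s = s1 ++ f1 /\ a \in f1 /\ g s1 = x) ->
  #|A| < #|X| + count_mem a u ->
  exists s1 f t, s ++ u = s1 ++ f ++ t /\ a \in f /\ g s1 = g (s1 ++ f).
Proof.
elim=> [|c u IH] s X HX /=.
  by rewrite addn0 => H; have := max_card (mem X); rewrite leqNgt H.
case: (eqVneq c a) => [->|Hca].
  case Hg: (g s \in X).
    have [s1 [f1 [Es [Hf Hg1]]]] := HX _ Hg => _.
    exists s1, f1, (a :: u); split; first by rewrite Es -catA.
    by split=> //; rewrite -Es Hg1.
  move=> Hc.
  have [||s1 [f [t [E Hr]]]] := IH (s ++ [:: a]) (g s |: X).
  - move=> x; rewrite in_setU1 => /predU1P [->|Hx].
      by exists s, [:: a]; rewrite mem_seq1 eqxx.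
    have [s1 [f1 [Es [Hf Hg1]]]] := HX _ Hx.
    exists s1, (f1 ++ [:: a]); split; first by rewrite Es catA.
    by rewrite mem_cat Hf.
  - by rewrite cardsU1 Hg add1n addSn -addnS; rewrite add1n in Hc.
  by exists s1, f, t; rewrite -E -catA.
move=> Hc.
have [||s1 [f [t [E Hr]]]] := IH (s ++ [:: c]) X.
- move=> x Hx; have [s1 [f1 [Es [Hf Hg1]]]] := HX _ Hx.
  exists s1, (f1 ++ [:: c]); split; first by rewrite Es catA.
  by rewrite mem_cat Hf.
- by [].
by exists s1, f, t; rewrite -E -catA.
Qed.

Definition act (S Q : finType) (delta : Q -> S -> Q) (u : seq S) : {ffun Q -> Q} :=
  [ffun q => foldl delta q u].

Lemma act_synt (S Q : finType) (L : language S) q0 delta (F : pred Q) :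
  (forall w, L w <-> F (foldl delta q0 w)) ->
  forall u v, act delta u = act delta v -> synt L u v.
Proof.
move=> HL u v E s t; rewrite !HL !foldl_cat.
have := congr1 (fun f : {ffun Q -> Q} => f (foldl delta q0 s)) E.
by rewrite !ffunE => ->.
Qed.

Lemma act_cat (S Q : finType) (delta : Q -> S -> Q) u v q :
  act delta (u ++ v) q = act delta v (act delta u q).
Proof. by rewrite !ffunE foldl_cat. Qed.

Lemma act_pump (S Q : finType) (delta : Q -> S -> Q) s f :
  act delta s = act delta (s ++ f) -> forall r, act delta (s ++ wpow f r) = act delta s.
Proof.
move=> E; elim=> [|r IH]; first by rewrite cats0.
apply/ffunP => q; rewrite wpowS catA act_cat -E -act_cat IH.
by [].
Qed.

Lemma many_absorb (S Q : finType) (L : language S) q0 delta (F : pred Q) n :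
  (forall w, L w <-> F (foldl delta q0 w)) ->
  0 < n ->
  (forall x : seq S, synt L (wpow x n) (wpow x (n + n))) ->
  (forall x y : seq S, synt L (y ++ wpow x n.+1) (wpow x n.+1 ++ y)) ->
  forall u b, #|{ffun Q -> Q}| < count_mem b u -> synt L u (u ++ nseq n b).
Proof.
move=> HL Hn H1 H2 u b Hc.
have [||s1 [f [t [E [Hf Hg]]]]] := @pump_gen S _ (act delta) b u [::] set0.
- by move=> x; rewrite in_set0.
- by rewrite cards0.
have Hs : synt L s1 (s1 ++ wpow f n) := act_synt HL (esym (act_pump Hg n)).
rewrite /= in E; rewrite {}E.
set X := s1 ++ f ++ t.
have C1 : synt L X (X ++ wpow f n).
  rewrite /X {1}Hs -catA -(central_pow H1 H2 f (f ++ t)) -!catA; reflexivity.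
apply: (synt_trans C1).
apply: (synt_trans (synt_catl X (synt_sym (absorb Hn H1 H2 Hf)))).
rewrite catA; apply: synt_catr; exact: synt_sym C1.
Qed.

Fixpoint Gw (S : finType) (n : nat) (s : seq S) : seq S :=
  match s with [::] => [::] | b :: s' => Gw n s' ++ nseq n b end.
Fixpoint Jw (S : finType) (n : nat) (s : seq S) : seq S :=
  match s with [::] => [::] | b :: s' => Jw n s' ++ nseq n.-1 b end.

Definition Ahyp (S : finType) (L : language S) n :=
  [/\ 0 < n, (forall x : seq S, synt L (wpow x n) (wpow x (n + n))) &
      (forall x y : seq S, synt L (y ++ wpow x n.+1) (wpow x n.+1 ++ y))].

Lemma nseq_central (S : finType) (L : language S) n :
  Ahyp L n -> forall b, central L (nseq n b).
Proof. by case=> Hn H1 H2 b; rewrite -wpow1; apply: central_pow. Qed.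

Lemma nseqS_central (S : finType) (L : language S) n :
  Ahyp L n -> forall b, central L (nseq n.+1 b).
Proof. by case=> Hn H1 H2 b y; rewrite -wpow1; apply: H2. Qed.

Lemma nseq_idem (S : finType) (L : language S) n :
  Ahyp L n -> forall b, synt L (nseq n b ++ nseq n b) (nseq n b).
Proof. by case=> Hn H1 H2 b; rewrite -wpow1; apply: idem2. Qed.

Lemma G_central (S : finType) (L : language S) n :
  Ahyp L n -> forall s, central L (Gw n s).
Proof.
move=> HA; elim=> [|b s IH] /=; first exact: central_nil.
by apply: central_cat => //; apply: nseq_central.
Qed.

Lemma G_absorb (S : finType) (L : language S) n :
  Ahyp L n -> forall s b, b \in s -> synt L (Gw n s ++ nseq n b) (Gw n s).
Proof.
move=> HA; elim=> [|c s IH] b //=; rewrite in_cons => /predU1P [->|Hb].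
  by rewrite -catA nseq_idem //; reflexivity.
rewrite -catA -(nseq_central HA c (nseq n b)) catA IH //; reflexivity.
Qed.

Lemma u_G (S : finType) (L : language S) n :
  forall s u, (forall b, b \in s -> synt L u (u ++ nseq n b)) -> synt L u (u ++ Gw n s).
Proof.
elim=> [|c s IH] u Hu /=; first by rewrite cats0; reflexivity.
rewrite catA -IH; first by apply: Hu; rewrite mem_head.
by move=> b Hb; apply: Hu; rewrite in_cons Hb orbT.
Qed.

Lemma G_swap (S : finType) (L : language S) n :
  Ahyp L n -> forall s b x, b \in s -> synt L (Gw n s ++ b :: x) (Gw n s ++ x ++ [:: b]).
Proof.
move=> HA s b x Hb.
rewrite -{1}(G_absorb HA Hb) -catA nseq_rcons.
have -> : b :: nseq n b ++ x = nseq n.+1 b ++ x by [].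
rewrite -(nseqS_central HA b x).
have -> : nseq n.+1 b = nseq n b ++ [:: b] by rewrite nseq_rcons cats0.
rewrite (catA x) (nseq_central HA b x) -!catA (catA (Gw n s)) (G_absorb HA Hb).
reflexivity.
Qed.

Lemma NF (S : finType) (L : language S) n :
  Ahyp L n -> forall (T : {set S}) s, {subset T <= s} ->
  forall w, synt L (Gw n s ++ w) (Gw n s ++ del T w ++ rev [seq c <- w | c \in T]).
Proof.
move=> HA T s HTs; elim=> [|c w IH]; first by reflexivity.
rewrite /del /=; case Hc: (c \in T) => /=.
  rewrite (G_swap HA _ (HTs _ Hc)) (catA (Gw n s) w) IH rev_cons -cats1 -!catA.
  reflexivity.
have -> : Gw n s ++ c :: w = (Gw n s ++ [:: c]) ++ w by rewrite -catA.
rewrite -(G_central HA s [:: c]) -catA IH catA (G_central HA s [:: c]) -!catA.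
reflexivity.
Qed.

Lemma J_cancel (S : finType) (L : language S) n :
  Ahyp L n -> forall s W, all (mem s) W -> synt L (Gw n s ++ Jw n W ++ W) (Gw n s).
Proof.
move=> HA s; elim=> [|b W IH] /=; first by rewrite cats0; reflexivity.
case/andP=> Hb HW.
have Hn : 0 < n by case: HA.
have E : nseq n.-1 b ++ b :: W = nseq n b ++ W.
  by rewrite nseq_rcons; case: n Hn {HA IH}.
rewrite -catA E (catA (Jw n W)) (nseq_central HA b (Jw n W)) -catA catA (G_absorb HA Hb).
exact: IH.
Qed.

Lemma clause3_G (S : finType) (L : language S) n :
  (forall (x y z : seq S) (a : S), ~ neutral L a -> L y -> L (x ++ y ++ z ++ nseq n a)) ->
  forall s, s != [::] -> (forall b, b \in s -> ~ neutral L b) ->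
  forall x y z, L y -> L (x ++ y ++ z ++ Gw n s).
Proof.
move=> H3; elim=> [|b s IH] // _ Hs x y z Hy /=.
case: s IH Hs => [|c s] IH Hs /=.
  by apply: H3 => //; apply: Hs; rewrite mem_head.
rewrite -catA.
have Hs' : forall d, d \in c :: s -> ~ neutral L d.
  by move=> d Hd; apply: Hs; rewrite in_cons Hd orbT.
have := IH isT Hs' x y z Hy.
move=> /(H3 [::] _ [::] b (Hs _ (mem_head _ _))) /=.
by rewrite -!catA.
Qed.

Lemma filter_nil (A : Type) (P : pred A) s : all (fun c => ~~ P c) s -> filter P s = [::].
Proof. by elim: s => //= c s IH /andP [/negbTE -> /IH]. Qed.

Lemma all_Jw (S : finType) (P : pred S) n W : all P W -> all P (Jw n W).
Proof.
by elim: W => //= b W IH /andP [Hb HW]; rewrite all_cat IH //= all_nseq Hb orbT.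
Qed.

Lemma AtoB_main (S Q : finType) (L : language S) q0 delta (F : pred Q) n :
  (forall w, L w <-> F (foldl delta q0 w)) ->
  Ahyp L n ->
  (forall (x y z : seq S) (a : S), ~ neutral L a -> L y -> L (x ++ y ++ z ++ nseq n a)) ->
  forall (u v : seq S) (T : {set S}),
  (forall a, a \in T -> ~ neutral L a /\ #|{ffun Q -> Q}| < count_mem a u) ->
  T != set0 -> L v -> infix (del T v) (del T u) -> L u.
Proof.
move=> HL HA H3 u v T HT HT0 Hv Hinf.
have [Hn H1 H2] := HA.
set s := enum T.
have HsT : {subset T <= s} by move=> c; rewrite mem_enum.
have HsT' : forall c, c \in s -> c \in T by move=> c; rewrite mem_enum.
have Hs0 : s != [::].
  case/set0Pn: HT0 => a Ha; apply/eqP => E.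
  by have := HsT _ Ha; rewrite E.
have Hsn : forall b, b \in s -> ~ neutral L b by move=> b /HsT' /HT [].
have HuG : synt L u (u ++ Gw n s).
  apply: u_G => b /HsT' /HT [_ Hc]; exact: (many_absorb HL Hn H1 H2 Hc).
have [al [be Eu]] := infixP Hinf.
have Hall : all (fun c => c \notin T) (del T u) := filter_all _ _.
rewrite Eu !all_cat in Hall; case/and3P: Hall => Hal _ Hbe.
set kv := [seq c <- v | c \in T].
set ku := [seq c <- u | c \in T].
set K := rev (rev ku ++ Jw n (rev kv)).
have HkvT : all (fun c => c \in T) kv by apply: filter_all.
have HkuT : all (fun c => c \in T) ku by apply: filter_all.
have HKT : all (fun c => c \in T) K.
  by rewrite /K all_rev all_cat all_rev HkuT /=; apply: all_Jw; rewrite all_rev.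
set w := al ++ v ++ be ++ K.
have Lw : L (al ++ v ++ (be ++ K) ++ Gw n s) := clause3_G H3 Hs0 Hsn al (be ++ K) Hv.
have E1 : synt L u (Gw n s ++ del T u ++ rev ku).
  apply: (synt_trans HuG); apply: (synt_trans (G_central HA s u)); exact: NF.
have Hdelw : del T w = del T u.
  rewrite Eu /w /del !filter_cat (all_filterP Hal) (all_filterP Hbe).
  rewrite (@filter_nil _ (fun c => c \notin T) K) ?cats0 //.
  by apply: sub_all HKT => c; rewrite negbK.
have Hkeepw : [seq c <- w | c \in T] = kv ++ K.
  have Fa : [seq c <- al | c \in T] = [::] by apply: filter_nil.
  have Fb : [seq c <- be | c \in T] = [::] by apply: filter_nil.
  by rewrite /w !filter_cat Fa Fb (all_filterP HKT).
have E2 : synt L (Gw n s ++ w) (Gw n s ++ del T u ++ rev ku).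
  apply: (synt_trans (NF HA HsT w)); rewrite Hdelw Hkeepw rev_cat /K revK.
  rewrite -!catA (catA (del T u) (rev ku)) (catA (Gw n s) (del T u ++ rev ku)).
  rewrite -(G_central HA s (del T u ++ rev ku)) -catA (J_cancel HA); first by reflexivity.
  by rewrite all_rev; apply/allP => c Hc; apply: HsT; exact: (allP HkvT c Hc).
apply: (synt_L _ Lw).
have -> : al ++ v ++ (be ++ K) ++ Gw n s = w ++ Gw n s by rewrite /w -!catA.
apply: (synt_trans (G_central HA s w)); apply: (synt_trans E2).
exact: synt_sym E1.
Qed.

From mathcomp Require Import zify.
From Stdlib Require Import ClassicalEpsilon.

Lemma leq_fact n : n <= n`!.
Proof.
elim: n => // n IH; rewrite factS; have := fact_gt0 n.
case: (n`!) => // k _; rewrite mulnS; lia.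
Qed.

Lemma act_congr (S Q : finType) (delta : Q -> S -> Q) a a' b :
  act delta a = act delta a' -> act delta (a ++ b) = act delta (a' ++ b).
Proof. by move=> E; apply/ffunP => q; rewrite !act_cat E. Qed.

Lemma exp_exists (S Q : finType) (delta : Q -> S -> Q) p :
  exists N, [/\ 0 < N, p <= N &
    forall x, act delta (wpow x N) = act delta (wpow x (N + N))].
Proof.
set m := #|{ffun Q -> Q}|.
exists (m`! * p.+1); split.
- by rewrite muln_gt0 fact_gt0.
- have := fact_gt0 m; case: (m`!) => // k _; lia.
move=> x.
pose h (i : 'I_m.+1) := act delta (wpow x i).
have : ~~ injectiveb h.
  apply/negP => /injectiveP Hi; have := leq_card h Hi.
  by rewrite card_ord ltnn.
case/injectivePn => i [j Hij Ehij].
wlog lt_ij : i j Hij Ehij / i < j.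
  move=> W; case: (ltngtP i j) => H; first exact: (W i j).
    by apply: (W j i) => //; rewrite eq_sym.
  by move: Hij; rewrite (val_inj H) eqxx.
rewrite /h in Ehij.
set d := j - i.
have Ej : (j : nat) = i + d by rewrite /d; lia.
rewrite Ej wpowD in Ehij.
have Hc : forall c, act delta (wpow x (i + c * d)) = act delta (wpow x i).
  elim=> [|c IH]; first by rewrite addn0.
  by rewrite mulSn addnCA addnC wpowD (act_congr _ IH) -Ehij.
have Hd : d %| m`!.
  apply: dvdn_fact; have := ltn_ord j; rewrite /d; lia.
have Hi : (i : nat) <= m`! * p.+1.
  have := ltn_ord i; have := leq_fact m; have := fact_gt0 m.
  case: (m`!) => // k; lia.
set N := m`! * p.+1.
have HdN : d %| N by apply: dvdn_mulr.
have E1 : N + N = i + (N %/ d) * d + (N - i) by rewrite divnK //; lia.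
have E2 : N = i + (N - i) by lia.
by rewrite {1}E2 E1 [in RHS]wpowD (act_congr _ (Hc _)) -wpowD.
Qed.

Definition nneu (S : finType) (L : language S) (a : S) : bool :=
  if excluded_middle_informative (neutral L a) then false else true.

Lemma nneuP (S : finType) (L : language S) a : nneu L a <-> ~ neutral L a.
Proof. by rewrite /nneu; case: excluded_middle_informative. Qed.

Lemma delN (S : finType) (L : language S) w : forall al be,
  L (al ++ w ++ be) <-> L (al ++ filter (nneu L) w ++ be).
Proof.
elim: w => [|c w IH] al be //=.
rewrite /nneu; case: excluded_middle_informative => Hc /=.
  by rewrite -(Hc al (w ++ be)); exact: IH.
by have := IH (al ++ [:: c]) be; rewrite -!catA.
Qed.

Lemma del_cat (S : finType) (T : {set S}) a b : del T (a ++ b) = del T a ++ del T b.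
Proof. exact: filter_cat. Qed.

Lemma BtoA (S Q : finType) (L : language S) q0 delta (F : pred Q) p :
  (forall w, L w <-> F (foldl delta q0 w)) ->
  (forall (u : seq S) (T : {set S}),
      (forall a, a \in T <-> (~ neutral L a /\ p <= count_mem a u)) ->
      T = set0 \/ (Cond L T (del T u) <-> L u)) ->
  exists n : nat, 0 < n /\
      (forall x : seq S, synt L (wpow x n) (wpow x (n + n))) /\
      (forall x y : seq S,
          synt L (y ++ wpow x n.+1) (wpow x n.+1 ++ y)) /\
      (forall (x y z : seq S) (a : S),
          ~ neutral L a -> L y -> L (x ++ y ++ z ++ nseq n a)).
Proof.
move=> HL HB.
have [N [HN0 HpN HN]] := exp_exists delta p.
have HTdef : forall u, forall a, a \in [set b | nneu L b && (p <= count_mem b u)] <->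
    (~ neutral L a /\ p <= count_mem a u).
  move=> u a; rewrite inE; split.
    by case/andP => /nneuP ? ?.
  by case=> /nneuP -> ->.
exists N; split=> //; split; first by move=> x; apply: act_synt HL _ _ (HN x).
split.
  move=> x y s t.
  have -> : s ++ (y ++ wpow x N.+1) ++ t = (s ++ y) ++ wpow x N.+1 ++ t by rewrite -!catA.
  have -> : s ++ (wpow x N.+1 ++ y) ++ t = s ++ wpow x N.+1 ++ (y ++ t) by rewrite -!catA.
  rewrite delN [X in _ <-> X]delN filter_wpow.
  set x' := filter (nneu L) x.
  case Ex' : x' => [|a x''].
    by rewrite wpow_nil /= -catA.
  rewrite -Ex'.
  set u1 := (s ++ y) ++ wpow x' N.+1 ++ t.
  set u2 := s ++ wpow x' N.+1 ++ y ++ t.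
  set T := [set b | nneu L b && (p <= count_mem b u1)].
  have Hcnt : forall b, count_mem b u1 = count_mem b u2.
    by move=> b; rewrite /u1 /u2 !count_cat; lia.
  have HT1 := HTdef u1.
  have HT2 : forall a, a \in T <-> (~ neutral L a /\ p <= count_mem a u2).
    by move=> b; rewrite -Hcnt; exact: HT1.
  have Hbig : forall c, c \in x' -> c \in T.
    move=> c Hc; rewrite inE.
    have Hn : nneu L c by move: Hc; rewrite mem_filter => /andP [].
    rewrite Hn /= /u1 !count_cat count_wpow.
    have : 0 < count_mem c x' by rewrite -has_count has_pred1.
    case: (count_mem c x') => // k _; lia.
  have HaT : a \in T by apply: Hbig; rewrite Ex' mem_head.
  have HT0 : T <> set0 by move=> E; rewrite E in_set0 in HaT.
  have Hdel : del T u1 = del T u2.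
    have HX : del T (wpow x' N.+1) = [::].
      rewrite /del filter_wpow filter_nil ?wpow_nil //.
      by apply/allP => c /Hbig ->.
    rewrite /u1 /u2; move: (wpow x' N.+1) HX => W HX.
    by rewrite !del_cat HX /= -catA.
  case: (HB u1 T HT1) => // <-.
  case: (HB u2 T HT2) => // <-.
  by rewrite Hdel.
move=> x y z a Ha Hy.
set u := x ++ y ++ z ++ nseq N a.
set T := [set b | nneu L b && (p <= count_mem b u)].
have HaT : a \in T.
  rewrite inE; apply/andP; split; first by apply/nneuP.
  by rewrite /u !count_cat count_nseq /= eqxx mul1n; lia.
have HT0 : T <> set0 by move=> E; rewrite E in_set0 in HaT.
case: (HB u T (HTdef u)) => // <-.
exists y; split => //.
rewrite /del filter_id /u !filter_cat; exact: infix_infix.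
Qed.

Theorem proposition5p5 (Sigma : finType) (L : language Sigma) :
  regular L ->
  let condA :=
    exists n : nat, 0 < n /\
      (* n is the idempotent exponent omega of the syntactic monoid *)
      (forall x : seq Sigma, synt L (wpow x n) (wpow x (n + n))) /\
      (forall x y : seq Sigma,
          synt L (y ++ wpow x n.+1) (wpow x n.+1 ++ y)) /\
      (forall (x y z : seq Sigma) (a : Sigma),
          ~ neutral L a -> L y -> L (x ++ y ++ z ++ nseq n a)) in
  let condB :=
    exists p : nat, forall (u : seq Sigma) (T : {set Sigma}),
      (forall a, a \in T <-> (~ neutral L a /\ p <= count_mem a u)) ->
      T = set0 \/ (Cond L T (del T u) <-> L u) in
  let condC :=
    exists p : nat, forall (u v : seq Sigma) (T : {set Sigma}),
      (forall a, a \in T <-> (~ neutral L a /\ p <= count_mem a u)) ->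
      L v -> T != set0 -> infix (del T v) (del T u) -> L u in
  (condA <-> condB) /\ (condB <-> condC).
Proof.
move=> [Q [q0 [delta [F HL]]]] condA condB condC.
split; split.
- case=> n [Hn [H1 [H2 H3]]].
  exists #|{ffun Q -> Q}|.+1 => u T HT.
  case: (eqVneq T set0) => [->|HT0]; first by left.
  right; split.
    case=> v [Hv Hinf]; rewrite /del filter_id -/(del T u) in Hinf.
    apply: (AtoB_main HL (And3 Hn H1 H2) H3 _ HT0 Hv Hinf).
    by move=> a /HT.
  by move=> Hu; exists u; split=> //; rewrite /del filter_id; exact: infix_refl.
- case=> p HB; exact: (BtoA HL HB).
- case=> p HB; exists p => u v T HT Hv HT0 Hinf.
  case: (HB u T HT) => [E|<-]; first by rewrite E eqxx in HT0.
  by exists v; split=> //; rewrite /del filter_id.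
- case=> p HC; exists p => u T HT.
  case: (eqVneq T set0) => [->|HT0]; first by left.
  right; split.
    case=> v [Hv Hinf]; rewrite /del filter_id -/(del T u) in Hinf.
    exact: (HC u v T HT Hv HT0 Hinf).
  by move=> Hu; exists u; split=> //; rewrite /del filter_id; exact: infix_refl.
Qed.
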